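(* Let $n \ge m \ge 2$ and let $K_{n,m}$ be the complete bipartite graph with bipartition $(X,Y)$, $|X|=n$, $|Y|=m$. If $U$ is a strong edge geodetic set of $K_{n,m}$ with $Y \subseteq U$, then $|U| \ge n+1$.
   Context: All graphs are finite, simple and connected. A set $S \subseteq V(G)$ is a strong edge geodetic set of $G$ if one can assign to every unordered pair $\{u,v\}$ of distinct vertices of $S$ either one shortest $u,v$-path $P_{uv}$ in $G$ or no path, in such a way that every edge of $G$ lies on at least one of the assigned paths. *)

(* Defs.v *)
From mathcomp Require Import all_boot.
Set Implicit Arguments. Unset Strict Implicit. Unset Printing Implicit Defensive.

(* A simple graph on a finType T is a relation e : rel T,
   assumed symmetric and irreflexive (true for the complete bipartite graph below). *)

Section Graphs.
Variable T : finType.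
Variable e : rel T.

Definition is_walk (u v : T) (s : seq T) : Prop :=
  exists p, s = u :: p /\ path e u p /\ last u p = v.

Definition walk_len (s : seq T) : nat := (size s).-1.

Definition shortest_path (u v : T) (s : seq T) : Prop :=
  is_walk u v s /\ forall s', is_walk u v s' -> walk_len s <= walk_len s'.

Definition edge_on (a b : T) (s : seq T) : Prop :=
  ((a, b) \in zip s (behead s)) \/ ((b, a) \in zip s (behead s)).

(* Strong edge geodetic set: an assignment of at most one shortest path to
   every unordered pair {u,v} of distinct vertices of S (indexed by the
   2-element set [set u; v]) covering every edge of the graph. *)
Definition strong_edge_geodetic (S : {set T}) : Prop :=
  exists f : {set T} -> option (seq T),
    (forall u v P, u \in S -> v \in S -> u != v -> f [set u; v] = Some P ->
       shortest_path u v P \/ shortest_path v u P) /\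
    (forall a b, e a b -> exists u v P,
       [/\ u \in S, v \in S, u != v, f [set u; v] = Some P & edge_on a b P]).

End Graphs.

Definition inX n m (x : 'I_n + 'I_m) : bool := if x is inl _ then true else false.

Definition Kbip n m : rel ('I_n + 'I_m) := fun x y => inX x != inX y.

Definition Xpart n m : {set 'I_n + 'I_m} := [set x | inX x].
Definition Ypart n m : {set 'I_n + 'I_m} := [set x | ~~ inX x].

(* Main.v *)
Require Import Defs.
From mathcomp Require Import all_boot.
From mathcomp Require Import zify.
Set Implicit Arguments. Unset Strict Implicit. Unset Printing Implicit Defensive.

Lemma card_le_rel (T1 T2 : finType) (A : {set T1}) (B : {set T2}) (R : T1 -> T2 -> bool) :
  (forall x, x \in A -> exists y, y \in B /\ R x y) ->
  (forall x x' y, R x y -> R x' y -> x = x') -> #|A| <= #|B|.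
Proof.
move=> hex huniq.
have -> : #|A| = #|[set Some x | x in A]| by rewrite card_imset //; move=> x y [].
apply: (leq_trans _ (leq_imset_card (fun y => [pick x | R x y]) B)).
apply: subset_leq_card; apply/subsetP=> z /imsetP [x xA ->].
have [y [yB Rxy]] := hex x xA.
apply/imsetP; exists y => //.
case: pickP => [x' Rx'|/(_ x)]; last by rewrite Rxy.
by rewrite (huniq _ _ _ Rxy Rx').
Qed.

Lemma card_sumset n m (U : {set 'I_n + 'I_m}) :
  #|U| = #|[set a | inl a \in U]| + #|[set b | inr b \in U]|.
Proof.
rewrite -!sum1_card (big_sumType _ (fun x => x \in U)).
by congr (_ + _); apply: eq_bigl => x; rewrite inE.
Qed.

Section Main.
Variables n m : nat.
Notation T := ('I_n + 'I_m)%type.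
Notation e := (@Kbip n m).

Lemma short_walk (x0 : 'I_n) (y0 : 'I_m) (u v : T) :
  exists s, is_walk e u v s /\ walk_len s <= 2.
Proof.
case: u => [a|b]; case: v => [a'|b'].
- exists [:: inl a; inr y0; inl a']; split => //; by exists [:: inr y0; inl a'].
- exists [:: inl a; inr b']; split => //; by exists [:: inr b'].
- exists [:: inr b; inl a']; split => //; by exists [:: inl a'].
- exists [:: inr b; inl x0; inr b']; split => //; by exists [:: inl x0; inr b'].
Qed.

Lemma key (x0 : 'I_n) (y0 : 'I_m) (u v : T) P a b :
  shortest_path e u v P -> u != v -> edge_on (inl a) (inr b) P ->
  inl a != u -> inl a != v ->
  exists c, [/\ c != b, (u = inr b /\ v = inr c) \/ (u = inr c /\ v = inr b)
              & P = [:: u; inl a; v]].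
Proof.
move=> [[p [-> [hp hl]]] hmin] uv hed au av.
have [s [hs hsl]] := short_walk x0 y0 u v.
have := hmin _ hs; rewrite /walk_len /= => hsz.
have hsz2 : size p <= 2 by exact: leq_trans hsz hsl.
clear hmin hs hsl hsz.
move: hsz2 hp hl hed; case: p => [|w [|w' [|w'' p]]] //= _.
- by move=> _ hl; rewrite hl eqxx in uv.
- move=> _ -> [|]; rewrite mem_seq1 xpair_eqE => /andP [/eqP h1 /eqP h2].
  + by rewrite h1 eqxx in au.
  + by rewrite h2 eqxx in av.
- move=> /andP [e1 /andP [e2 _]] hl; subst w'.
  move=> [|]; rewrite !inE !xpair_eqE => /orP [] /andP [/eqP h1 /eqP h2]; subst;
    rewrite ?eqxx in au av => //.
  all: first [ move: e1 uv au; case: u => [?|c] //=; rewrite /Kbip //= => _ uv _; exists c; split; [ by apply/eqP => cb; move: uv; rewrite cb eqxx | by [left|right] | by [] ]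
             | move: e2 uv av; case: v => [?|c] //=; rewrite /Kbip //= => _ uv _; exists c; split; [ by apply/eqP => cb; move: uv; rewrite cb eqxx | by [left|right] | by [] ] ].
Qed.

End Main.

Theorem mainTheorem3 (n m : nat) (U : {set 'I_n + 'I_m}) :
  2 <= m -> m <= n ->
  Ypart n m \subset U ->
  strong_edge_geodetic (@Kbip n m) U ->
  n.+1 <= #|U|.
Proof.
move=> hm hmn hY [f [hf hcov]].
have x0 : 'I_n by exists 0; lia.
have y0 : 'I_m by exists 0; lia.
pose A := [set a : 'I_n | inl a \notin U].
pose D := setX A [set: 'I_m].
pose B := [set q : 'I_m * 'I_m | q.1 != q.2].
pose R (p : 'I_n * 'I_m) (q : 'I_m * 'I_m) :=
  [&& q.1 == p.2, q.1 != q.2 &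
   omap (fun P => nth (inr q.1) P 1) (f [set inr q.1; inr q.2]) == Some (inl p.1)].
have hDB : #|D| <= #|B|.
  apply: (@card_le_rel _ _ D B R).
  - move=> [a b]; rewrite !inE /= andbT => aU.
    have [u [v [P [uU vU uv fP hed]]]] := hcov (inl a) (inr b) erefl.
    have au : inl a != u by apply/eqP => h; rewrite h uU in aU.
    have av : inl a != v by apply/eqP => h; rewrite h vU in aU.
    have [sh|sh] := hf u v P uU vU uv fP.
    + have [c [cb hor hP]] := key x0 y0 sh uv hed au av.
      exists (b, c); split; first by rewrite inE /= eq_sym.
      rewrite /R /= eqxx eq_sym cb /=.
      have -> : [set inr b; inr c] = [set u; v] :> {set 'I_n + 'I_m}.
        by case: hor => [[-> ->]|[-> ->]] //; rewrite setUC.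
      by rewrite fP hP /=.
    + have vu : v != u by rewrite eq_sym.
      have [c [cb hor hP]] := key x0 y0 sh vu hed av au.
      exists (b, c); split; first by rewrite inE /= eq_sym.
      rewrite /R /= eqxx eq_sym cb /=.
      have -> : [set inr b; inr c] = [set u; v] :> {set 'I_n + 'I_m}.
        by case: hor => [[-> ->]|[-> ->]] //; rewrite setUC.
      by rewrite fP hP /=.
  - move=> [a b] [a' b'] [c d] /and3P [/= /eqP e1 _ /eqP e2] /and3P [/= /eqP e1' _ /eqP e2'].
    by move: e2'; rewrite e2 => -[->]; rewrite -e1 -e1'.
have hD : #|D| = #|A| * m by rewrite cardsX cardsT card_ord.
have hB : #|B| <= m * m - m.
  pose diag := [set q : 'I_m * 'I_m | q.1 == q.2].
  have hdiag : m <= #|diag|.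
    have hc : #|[set (i, i) | i : 'I_m]| = m.
      by rewrite card_imset ?card_ord // => i j [].
    rewrite -[X in X <= _]hc; apply: subset_leq_card; apply/subsetP => q /imsetP [i _ ->]; by rewrite inE.
  have hBd : B = ~: diag by apply/setP => q; rewrite !inE.
  have := cardsC diag; rewrite -hBd card_prod card_ord; lia.
have hU := card_sumset U.
have hUY : [set b | inr b \in U] = [set: 'I_m].
  apply/setP => b; rewrite !inE; apply: (subsetP hY); by rewrite inE.
have hUX : [set a | inl a \in U] = ~: A by apply/setP => a; rewrite !inE negbK.
have := cardsC A; rewrite card_ord => hA.
rewrite hU hUY hUX cardsT card_ord.
move: hDB; rewrite hD => hDB.
nia.
Qed.
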